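(* Let $\mathbf B\in\mathbb R_+^{m\times n}$, $\mathbf d\in\mathbb R^n_+$ and $\mathcal J\subseteq[m]$. For $\mathbf h\in\mathbb R^m_+$ let $z(\mathbf h)=\min_{\mathbf y\ge\mathbf 0}\{\mathbf d^T\mathbf y \mid \mathbf B\mathbf y\ge\mathbf h\}$, and for $\mathcal W\subseteq[m]$ write $z(\mathcal W)=z(\sum_{i\in\mathcal W}\mathbf e_i)$. Suppose there exist $\gamma>0$ and $w_i\in(0,1]$ for all $i\in\mathcal J$ such that: (1) for all $i\in\mathcal J$, $\dfrac{z(\mathbf e_i)}{w_i}>4\gamma\cdot\dfrac{\log n}{\log\log n}$; (2) for all $\mathcal W\subseteq\mathcal J$, $\sum_{i\in\mathcal W}w_i\le 1$ implies $z(\mathcal W)\le\gamma$. Then $z(\mathcal J)\le 4\gamma\cdot\dfrac{\log n}{\log\log n}$.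
   Context: $\mathbf e_i$ denotes the $i$-th standard basis vector of $\mathbb R^m$; $n$ is the number of columns of $\mathbf B$. *)

(* Defs.v *)
From HB Require Import structures.
From mathcomp Require Import all_boot all_order all_algebra.
From mathcomp Require Import all_classical all_reals all_analysis.
Set Implicit Arguments. Unset Strict Implicit. Unset Printing Implicit Defensive.
Import Order.TTheory GRing.Theory Num.Theory.
Local Open Scope ring_scope.
Local Open Scope classical_set_scope.

(* z(h) = min_{y >= 0} { d^T y | B y >= h }, as an extended real
   (infimum over the feasible set; +oo if infeasible; the LP minimum is
   attained whenever feasible since the objective is bounded below). *)
Definition lpval (R : realType) (m n : nat) (B : 'M[R]_(m, n)) (d : 'cV[R]_n)
  (h : 'cV[R]_m) : \bar R :=
  ereal_inf [set ((d^T *m y) 0 0)%:E | y in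
    [set y : 'cV[R]_n | (forall j, 0 <= y j 0) /\ (forall i, h i 0 <= (B *m y) i 0)]].

Definition ebasis (R : realType) (m : nat) (i : 'I_m) : 'cV[R]_m := delta_mx i 0.

Definition lpvalset (R : realType) (m n : nat) (B : 'M[R]_(m, n)) (d : 'cV[R]_n)
  (W : {set 'I_m}) : \bar R :=
  lpval B d (\sum_(i in W) ebasis R i).

(* Main.v *)
Require Import Defs.
From HB Require Import structures.
From mathcomp Require Import all_boot all_order all_algebra.
From mathcomp Require Import all_classical all_reals all_analysis.
From mathcomp Require Import ring lra.
Import Order.TTheory GRing.Theory Num.Theory.
Local Open Scope ring_scope.


Section LP.
Variables (R : realType) (m n : nat) (B : 'M[R]_(m, n)) (d : 'cV[R]_n).

Definition cost (y : 'cV[R]_n) : R := \sum_j d j 0 * y j 0.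
Definition cov (y : 'cV[R]_n) i : R := \sum_j B i j * y j 0.

Lemma costE y : (d^T *m y) 0 0 = cost y.
Proof. by rewrite !mxE; apply: eq_bigr => j _; rewrite mxE. Qed.
Lemma covE y i : (B *m y) i 0 = cov y i.
Proof. by rewrite !mxE. Qed.

Lemma lpval_le (h : 'cV[R]_m) (y : 'cV[R]_n) : (forall j, 0 <= y j 0) -> (forall i, h i 0 <= cov y i) ->
  (lpval B d h <= (cost y)%:E)%E.
Proof.
move=> y0 hy; apply: ereal_inf_lbound; exists y; last by rewrite costE.
by split => // i; rewrite covE.
Qed.

Lemma lpval_ge (h : 'cV[R]_m) (M : \bar R) :
  (forall y : 'cV[R]_n, (forall j, 0 <= y j 0) -> (forall i, h i 0 <= cov y i) -> (M <= (cost y)%:E)%E) ->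
  (M <= lpval B d h)%E.
Proof.
move=> H; apply: le_ereal_inf_tmp => _ [y [y0 hy] <-].
rewrite costE; apply: H => // i; rewrite -covE; exact: hy.
Qed.

Lemma sum_ebasis (W : {set 'I_m}) a : (\sum_(i in W) ebasis R i) a 0 = (a \in W)%:R.
Proof.
rewrite summxE.
have -> : \sum_(i in W) ebasis R i a 0 = \sum_(i in W) (a == i)%:R.
  by apply: eq_bigr => i _; rewrite /ebasis mxE eqxx andbT.
case: (boolP (a \in W)) => aW.
  rewrite (bigD1 a) //= eqxx big1 ?addr0 // => i /andP[_ /negbTE]; by rewrite eq_sym => ->.
by rewrite big1 // => i iW; case: eqP => // ai; rewrite ai iW in aW.
Qed.

Lemma ebasisE (i a : 'I_m) : ebasis R i a 0 = (a == i)%:R.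
Proof. by rewrite /ebasis mxE eqxx andbT. Qed.

End LP.
Arguments cost {R n} d y.
Arguments cov {R m n} B y i.
Arguments lpval_le {R m n B d h y}.
Arguments lpval_ge {R m n B d h M}.


Section Num.
Variable R : realType.

Lemma e_lt3 : expR (1 : R) < 3.
Proof.
have h1 : expR (1 : R) = expR (6^-1) ^+ 6.
  by rewrite -expRM_natl; congr expR; rewrite mulfV.
have h2 : 5/6 <= expR (- (6^-1) : R) by apply: le_trans (expR_ge1Dx _); lra.
have h3 : expR (6^-1 : R) <= 6/5.
  rewrite -[6^-1 : R]opprK expRN.
  rewrite -(@invrK _ (6/5)) lef_pV2 ?posrE ?expR_gt0 //; first by lra.
have h4 : expR (6^-1 : R) ^+ 6 <= (6/5) ^+ 6.
  by rewrite lerXn2r // ?nnegrE ?expR_ge0 //; lra.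
rewrite h1; apply: (le_lt_trans h4); rewrite !exprS expr0; lra.
Qed.

Lemma ln_le_sub1 (x : R) : 0 < x -> ln x <= x - 1.
Proof.
move=> x0; have := @le_ln1Dx R (x - 1).
have -> : 1 + (x - 1) = x by ring.
apply; lra.
Qed.

Lemma ln_le_e (x : R) : 0 < x -> ln x <= x / 2.
Proof.
move=> x0.
have e0 : 0 < expR (1 : R) by exact: expR_gt0.
have e2 : 2 <= expR (1 : R) by apply: le_trans (expR_ge1Dx _); lra.
have := @ln_le_sub1 (x / expR 1) (divr_gt0 x0 e0).
rewrite ln_div ?posrE // expRK => H.
have : x / expR 1 <= x / 2.
  by rewrite ler_pdivrMr // mulrAC ler_pdivlMr //; nra.
lra.
Qed.


Lemma ln_n_gt1 (n : nat) : (2 < n)%N -> 1 < ln (n%:R : R).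
Proof.
move=> hn.
have n3 : (3 : R) <= n%:R by rewrite ler_nat.
have := e_lt3; rewrite -(@ltr_ln R) ?posrE ?expR_gt0 //.
rewrite expRK => h; apply: (lt_le_trans h).
by rewrite ler_ln ?posrE //; lra.
Qed.

Lemma key_num (l g C : R) : 1 < l -> 0 < g ->
  let u := ln l in let L := l / u in let lam := u - ln u in
  4*g*L - g < C -> C <= 4*g*L ->
  [/\ 0 < u, expR lam = L, 1 <= lam, 1 <= L &
      l + (expR lam - 1)/(4*g*L) * C < lam * (C / g)].
Proof.
move=> l1 g0 u L lam hC1 hC2.
have u0 : 0 < u by exact: ln_gt0.
have hu1 := @ln_le_sub1 _ u0.
have hu2 := @ln_le_e _ u0.
have hl : u <= l - 1 := @ln_le_sub1 _ (lt_trans ltr01 l1).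
have eL : expR lam = L.
  rewrite /lam expRB /u lnK ?posrE; last lra.
  by rewrite lnK.
have lam1 : 1 <= lam by rewrite /lam; lra.
have L1 : 1 <= L by rewrite /L ler_pdivlMr //; lra.
have L0 : 0 < L by lra.
split => //; rewrite eL.
have lamL : l / 2 <= lam * L.
  rewrite /L mulrA ler_pdivrMr // mulrAC ler_pdivlMr //.
  have : u / 2 <= lam by rewrite /lam; lra.
  move=> h; nra.
set s := C / g.
have eC : C = s * g by rewrite /s divfK // gt_eqF.
have hs1 : 4 * L - 1 < s.
  by rewrite /s ltr_pdivlMr //; lra.
have hs2 : s <= 4 * L.
  by rewrite /s ler_pdivrMr //; lra.
have et : (L - 1) / (4 * g * L) * C = ((L - 1) / L) * s / 4.
  rewrite eC; field; apply/andP; split; apply: lt0r_neq0 => //.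
have t1 : (L - 1) / L <= 1 by rewrite ler_pdivrMr //; lra.
have t0 : 0 <= (L - 1) / L by apply: divr_ge0; lra.
rewrite et.
have s0 : 0 < s by lra.
have : (L - 1) / L * s <= s by nra.
have : 3 * L <= s by lra.
move=> h1 h2; nra.
Qed.

End Num.


Lemma expR_cvx (R : realType) (a x : R) : 0 <= x -> x <= 1 ->
  expR (x * a) <= 1 + (expR a - 1) * x.
Proof.
move=> x0 x1.
have := @convex_expR R (Itv01 x0 x1) a 0.
rewrite !convRE /= expR0 mulr0 addr0 => H.
apply: (le_trans H); rewrite mulr1 /unstable.onem; lra.
Qed.

Section Greedy.
Variables (R : realType) (m n : nat) (J : {set 'I_m}) (c : 'I_m -> R)
  (be : 'I_m -> 'I_n -> R) (K lam : R).
Hypotheses (K0 : 0 < K) (lam0 : 0 <= lam) (hc : forall i, i \in J -> 0 < c i)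
  (hbe0 : forall i j, i \in J -> 0 <= be i j)
  (hbe1 : forall i j, i \in J -> c i * be i j <= 1)
  (oracle : forall pi : 'I_n -> R, (forall j, 0 < pi j) ->
     exists i, i \in J /\ K * \sum_j pi j * be i j < \sum_j pi j).

Definition Cs (k : 'I_m -> nat) := \sum_i (k i)%:R * c i.
Definition Ss (k : 'I_m -> nat) j := \sum_i (k i)%:R * (c i * be i j).
Definition Phi (k : 'I_m -> nat) := \sum_j expR (lam * Ss k j).
Definition th := (expR lam - 1) / K.
Definition Inv k := (forall i, k i != 0%N -> i \in J) /\ Phi k <= n%:R * expR (th * Cs k).
Definition bump (k : 'I_m -> nat) i0 := fun i => (k i + (i == i0))%N.

Lemma sum_bump (f : 'I_m -> R) k i0 :
  \sum_i (bump k i0 i)%:R * f i = \sum_i (k i)%:R * f i + f i0.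
Proof.
rewrite /bump; under eq_bigr => i _ do rewrite natrD mulrDl.
rewrite big_split /=; congr (_ + _).
rewrite (bigD1 i0) //= eqxx mul1r big1 ?addr0 // => i /negbTE ->; by rewrite mul0r.
Qed.

Lemma Inv0 : Inv (fun _ => 0%N).
Proof.
split => // ; rewrite /Phi /Cs /Ss.
have z : forall f : 'I_m -> R, \sum_i (0%N)%:R * f i = 0.
  by move=> f; apply: big1 => i _; rewrite mulr0n mul0r.
rewrite z mulr0 expR0 mulr1.
under eq_bigr => j _ do rewrite z mulr0 expR0.
by rewrite sumr_const card_ord.
Qed.

Lemma step k : Inv k -> exists i0, i0 \in J /\ Inv (bump k i0).
Proof.
move=> [hk hPhi].
pose pi j := expR (lam * Ss k j).
have pi0 : forall j, 0 < pi j by move=> j; exact: expR_gt0.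
have [i0 [i0J hor]] := @oracle pi pi0.
exists i0; split => //; split.
  move=> i; rewrite /bump /=; have [->//|ne] := eqVneq i i0; rewrite addn0; exact: hk.
have hE : 0 <= expR lam - 1 by rewrite subr_ge0 -expR0 ler_expR.
have hc0 := hc i0 i0J.
have eS : forall j, Ss (bump k i0) j = Ss k j + c i0 * be i0 j.
  by move=> j; rewrite /Ss sum_bump.
have eC : Cs (bump k i0) = Cs k + c i0 by rewrite /Cs sum_bump.
have h1 : Phi (bump k i0) <= \sum_j pi j * (1 + (expR lam - 1) * (c i0 * be i0 j)).
  rewrite /Phi; apply: ler_sum => j _.
  rewrite eS mulrDr expRD ler_wpM2l ?expR_ge0 // mulrC.
  apply: expR_cvx; last exact: hbe1.
  by apply: mulr_ge0; [exact: ltW|exact: hbe0].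
have h2 : \sum_j pi j * (1 + (expR lam - 1) * (c i0 * be i0 j)) =
   \sum_j pi j + (expR lam - 1) * c i0 * \sum_j pi j * be i0 j.
  rewrite mulr_sumr -big_split /=; apply: eq_bigr => j _; ring.
set P := \sum_j pi j in h2 hor.
set X := \sum_j pi j * be i0 j in h2 hor.
have h3 : (expR lam - 1) * c i0 * X <= th * c i0 * P.
  have hX : X <= P / K by rewrite ler_pdivlMr // mulrC ltW.
  have := ler_wpM2l (mulr_ge0 hE (ltW hc0)) hX.
  have -> : th * c i0 * P = (expR lam - 1) * c i0 * (P / K).
    by rewrite /th; field; exact: lt0r_neq0.
  by [].
have P0 : 0 <= P by apply: sumr_ge0 => j _; exact: ltW.
have h4 : P + th * c i0 * P <= P * expR (th * c i0).
  have -> : P + th * c i0 * P = P * (1 + th * c i0) by ring.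
  by rewrite ler_wpM2l // expR_ge1Dx.
apply: (le_trans h1); rewrite h2; apply: le_trans (lerD (lexx _) h3) _.
apply: (le_trans h4); rewrite eC mulrDr expRD mulrA ler_wpM2r ?expR_ge0 //.
Qed.

Lemma iterate (g eps : R) : 0 < eps ->
  (forall i, i \in J -> eps <= c i /\ c i <= g) ->
  forall N : nat, exists k, Inv k /\ Cs k <= K /\ (K - g < Cs k \/ N%:R * eps <= Cs k).
Proof.
move=> e0 hce; elim=> [|N [k [hI [hK hor]]]].
  exists (fun _ => 0%N); split; first exact: Inv0.
  have -> : Cs (fun _ => 0%N) = 0 by apply: big1 => i _; rewrite mulr0n mul0r.
  by split; [exact: ltW|right; rewrite mul0r].
have [lt|ge] := ltP (K - g) (Cs k).
  by exists k; split => //; split => //; left.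
case: hor => [|hN]; first by move=> h; exfalso; move: h; rewrite ltNge ge.
have [i0 [i0J hI']] := @step k hI.
have eC : Cs (bump k i0) = Cs k + c i0 by rewrite /Cs sum_bump.
have [h1 h2] := hce i0 i0J.
exists (bump k i0); split => //; rewrite eC; split; first lra.
by right; rewrite -addn1 natrD mulrDl mul1r; lra.
Qed.

Lemma greedy (g eps : R) : 0 < eps ->
  (forall i, i \in J -> eps <= c i /\ c i <= g) ->
  exists k, Inv k /\ K - g < Cs k /\ Cs k <= K.
Proof.
move=> e0 hce.
have [k [hI [hK [lt|hN]]]] := @iterate g eps e0 hce (Num.truncn (K / eps)).+1.
  by exists k.
exfalso; have := @Num.Theory.truncnS_gt _ (K / eps).
rewrite ltr_pdivrMr // => h; lra.
Qed.

End Greedy.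


Lemma sum_if (R : realType) n (f : 'I_n -> R) j a :
  \sum_k f k * (if k == j then a else 0) = f j * a.
Proof.
rewrite (bigD1 j) //= eqxx big1 ?addr0 // => k /negbTE ->; by rewrite mulr0.
Qed.

Lemma lpval_single (R : realType) (m n : nat) (B : 'M[R]_(m, n)) (d : 'cV[R]_n)
  (hB : forall i j, 0 <= B i j) (hd : forall j, 0 <= d j 0) i j (r : R) :
  lpval B d (ebasis R i) = r%:E -> r * B i j <= d j 0.
Proof.
move=> hr.
have [->|Bne] := eqVneq (B i j) 0; first by rewrite mulr0.
have B0 : 0 < B i j by rewrite lt_neqAle eq_sym Bne hB.
pose y : 'cV[R]_n := \col_k (if k == j then (B i j)^-1 else 0).
have := @lpval_le R m n B d (ebasis R i) y.
rewrite hr lee_fin /cost /cov.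
under eq_bigr => k _ do rewrite mxE.
rewrite sum_if -ler_pdivlMr // mulrC; apply.
  by move=> k; rewrite mxE; case: eqP => // _; rewrite invr_ge0 ltW.
move=> a; rewrite ebasisE.
under eq_bigr => k _ do rewrite mxE.
rewrite sum_if; case: eqP => [->|_]; first by rewrite mulfV // gt_eqF.
by rewrite mulr_ge0 // invr_ge0 ltW.
Qed.

Theorem lemma4 (R : realType) (m n : nat) (B : 'M[R]_(m, n)) (d : 'cV[R]_n)
  (J : {set 'I_m})
  (hn : (2 < n)%N)
  (hB : forall i j, 0 <= B i j) (hd : forall j, 0 <= d j 0)
  (g : R) (w : 'I_m -> R)
  (hg : 0 < g)
  (hw : forall i, i \in J -> 0 < w i <= 1)
  (h1 : forall i, i \in J ->
        (lpval B d (ebasis R i) * ((w i)^-1)%:E >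
         (4 * g * (ln n%:R / ln (ln n%:R)))%:E)%E)
  (h2 : forall W : {set 'I_m}, W \subset J ->
        \sum_(i in W) w i <= 1 -> (lpvalset B d W <= g%:E)%E) :
  (lpvalset B d J <= (4 * g * (ln n%:R / ln (ln n%:R)))%:E)%E.
Proof.
set l := ln (n%:R : R).
have hl1 : 1 < l := @ln_n_gt1 R n hn.
set L := l / ln l.
set K := 4 * g * L.
have u0 : 0 < ln l by exact: ln_gt0.
have L1 : 1 <= L.
  rewrite /L ler_pdivlMr // mul1r; have := @ln_le_sub1 R l (lt_trans ltr01 hl1); lra.
have K0 : 0 < K by rewrite /K; apply: mulr_gt0 => //; lra.
rewrite leNgt; apply/negP => hJ.
have hc : forall i, i \in J -> exists r, lpval B d (ebasis R i) = r%:E /\ 0 <= r /\ r <= g.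
  move=> i iJ.
  have hle : (lpval B d (ebasis R i) <= g%:E)%E.
    have := h2 [set i]; rewrite /lpvalset !big_set1 finset.sub1set; apply => //.
    by case/andP: (hw i iJ).
  have hge : (0%:E <= lpval B d (ebasis R i))%E.
    apply: lpval_ge => y y0 _; rewrite lee_fin /cost; apply: sumr_ge0 => j _.
    exact: mulr_ge0.
  move: hle hge; case: (lpval B d (ebasis R i)) => [r| |] hle hge.
  - by rewrite !lee_fin in hle hge; exists r; split => //; split.
  - by rewrite leye_eq in hle.
  - by have := ltNyr (0:R); rewrite ltNge hge.
pose c i := fine (lpval B d (ebasis R i)).
have cE : forall i, i \in J -> lpval B d (ebasis R i) = (c i)%:E.
  by move=> i iJ; rewrite /c; have [r [-> _]] := hc i iJ.
have cg : forall i, i \in J -> 0 <= c i <= g.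
  by move=> i iJ; have [r [hr [r0 rg]]] := hc i iJ; rewrite /c hr /= r0 rg.
have cw : forall i, i \in J -> K * w i < c i.
  move=> i iJ; have := h1 i iJ; rewrite cE // -EFinM lte_fin -/l -/L -/K.
  case/andP: (hw i iJ) => w0 _.
  by rewrite ltr_pdivlMr.
have cpos : forall i, i \in J -> 0 < c i.
  move=> i iJ; apply: le_lt_trans (cw i iJ); case/andP: (hw i iJ) => w0 _.
  by apply: mulr_ge0; lra.
have cB : forall i j, i \in J -> c i * B i j <= d j 0.
  by move=> i j iJ; apply: lpval_single => //; exact: cE.
pose be i j := B i j / d j 0.
have hbe0 : forall i j, i \in J -> 0 <= be i j.
  by move=> i j _; rewrite /be divr_ge0.
have hbe1 : forall i j, i \in J -> c i * be i j <= 1.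
  move=> i j iJ; rewrite /be.
  have [d0|dn0] := eqVneq (d j 0) 0; first by rewrite d0 invr0 !mulr0.
  have dp : 0 < d j 0 by rewrite lt_neqAle eq_sym dn0 hd.
  by rewrite mulrA ler_pdivrMr // mul1r; exact: cB.
have oracle : forall pi : 'I_n -> R, (forall j, 0 < pi j) ->
     exists i, i \in J /\ K * \sum_j pi j * be i j < \sum_j pi j.
  move=> pi pi0.
  case: (pselect (exists i, i \in J /\ K * \sum_j pi j * be i j < \sum_j pi j)) => // hno.
  exfalso.
  set P := \sum_j pi j.
  have P0 : 0 < P.
    rewrite /P (bigD1 (Ordinal (ltn_trans (isT : (1 < 2)%N) hn))) //=.
    by apply: ltr_pwDl; [exact: pi0|apply: sumr_ge0 => j _; exact: ltW].
  pose y : 'cV[R]_n := \col_j (K / P * (pi j / d j 0)).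
  have y0 : forall j, 0 <= y j 0.
    move=> j; rewrite mxE; apply: mulr_ge0; first by apply: divr_ge0; exact: ltW.
    by apply: divr_ge0 => //; exact: ltW.
  have hcost : cost d y <= K.
    rewrite /cost.
    have : \sum_j d j 0 * y j 0 <= \sum_j K / P * pi j.
      apply: ler_sum => j _; rewrite mxE.
      have [d0|dn0] := eqVneq (d j 0) 0.
        by rewrite d0 mul0r; apply: mulr_ge0; [apply: divr_ge0; exact: ltW|exact: ltW].
      rewrite mulrCA [d j 0 * _]mulrCA mulfV // mulr1; exact: lexx.
    rewrite -mulr_sumr -/P divfK //; first exact: lt0r_neq0.
  have hfeas : forall i, (\sum_(i0 in J) ebasis R i0) i 0 <= cov B y i.
    move=> i; rewrite sum_ebasis.
    have cov0 : 0 <= cov B y i.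
      by rewrite /cov; apply: sumr_ge0 => j _; apply: mulr_ge0.
    case: (boolP (i \in J)) => iJ //=.
    have : ~ (K * \sum_j pi j * be i j < P) by move=> h; apply: hno; exists i.
    move/negP; rewrite -leNgt => hP.
    have -> : cov B y i = K / P * \sum_j pi j * be i j.
      rewrite /cov mulr_sumr; apply: eq_bigr => j _; rewrite mxE /be.
      by ring.
    by rewrite mulrAC ler_pdivlMr // mul1r.
  have hz := @lpval_le R m n B d _ y y0 hfeas.
  have := lt_le_trans hJ hz; rewrite lte_fin => h; lra.
pose eps := (1 + \sum_(i in J) (c i)^-1)^-1.
have Sg0 : 0 <= \sum_(i in J) (c i)^-1.
  by apply: sumr_ge0 => i iJ; rewrite invr_ge0 ltW // cpos.
have eps0 : 0 < eps by rewrite /eps invr_gt0; lra.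
have hce : forall i, i \in J -> eps <= c i /\ c i <= g.
  move=> i iJ; split; last by case/andP: (cg i iJ).
  rewrite /eps -[c i]invrK lef_pV2 ?posrE ?invr_gt0 ?cpos //; last lra.
  rewrite (bigD1 i) //=.
  have : 0 <= \sum_(i0 in J | i0 != i) (c i0)^-1.
    by apply: sumr_ge0 => j /andP[jJ _]; rewrite invr_ge0 ltW // cpos.
  lra.
have lam0 : 0 <= ln l - ln (ln l).
  have := @ln_le_sub1 R (ln l) u0; lra.
have [k [[hk hPhi] [hC1 hC2]]] :=
  @greedy R m n J c be K (ln l - ln (ln l)) K0 lam0 cpos hbe0 hbe1 oracle g eps eps0 hce.
set lam := ln l - ln (ln l) in hPhi.
set C := Cs _ _ c k in hPhi hC1 hC2.
have [_ eL lam1 _ hkey] := @key_num R l g C hl1 hg hC1 hC2.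
have lamp : 0 < lam by rewrite /lam; lra.
have hth : th R K lam * C = (expR lam - 1)/(4*g*(l/ln l)) * C by [].
have hM : forall j, lam * Ss R m n c be k j <= l + th R K lam * C.
  move=> j.
  have : expR (lam * Ss R m n c be k j) <= n%:R * expR (th R K lam * C).
    apply: le_trans hPhi; rewrite /Phi (bigD1 j) //= lerDl.
    by apply: sumr_ge0 => *; exact: expR_ge0.
  have n0 : (0 : R) < n%:R by rewrite ltr0n; apply: ltn_trans hn.
  by rewrite -[X in X * expR _](@lnK R n%:R) ?posrE // -expRD ler_expR.
set M := (l + th R K lam * C) / lam.
have hSM : forall j, Ss R m n c be k j <= M.
  by move=> j; rewrite /M ler_pdivlMr // mulrC.
have gK : g <= K by rewrite /K; nra.
have C0 : 0 < C by lra.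
have M0 : 0 < M.
  rewrite /M divr_gt0 //; have : 0 <= th R K lam * C; last lra.
  rewrite /th; apply: mulr_ge0; last lra.
  apply: divr_ge0; last lra.
  by rewrite subr_ge0 -expR0 ler_expR; lra.
have hMC : g < C / M.
  rewrite ltr_pdivlMr // mulrC -ltr_pdivlMr //.
  by rewrite /M ltr_pdivrMr // hth [C / g * lam]mulrC.
pose W := [set i | k i != 0%N].
have WJ : W \subset J by apply/fintype.subsetP => i; rewrite inE; exact: hk.
have eW : forall f : 'I_m -> R, (forall i, i \notin W -> f i = 0) ->
    \sum_(i in W) f i = \sum_i f i.
  move=> f hf; rewrite [RHS](bigID (fun i => i \in W)) /= [X in _ + X]big1 ?addr0 //.
have hlight : \sum_(i in W) w i <= 1.
  have : \sum_(i in W) w i <= \sum_(i in W) (k i)%:R * (c i / K).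
    apply: ler_sum => i iW.
    have iJ : i \in J by move: iW; rewrite inE; exact: hk.
    have k1 : (1 : R) <= (k i)%:R by rewrite ler1n lt0n; move: iW; rewrite inE.
    have wc : w i <= c i / K by rewrite ler_pdivlMr // mulrC ltW // cw.
    case/andP: (hw i iJ) => w0 _.
    nra.
  rewrite [X in _ <= X]eW; last first.
    by move=> i; rewrite inE negbK => /eqP ki; rewrite ki mul0r.
  have -> : \sum_i (k i)%:R * (c i / K) = C / K.
    by rewrite /C /Cs mulr_suml; apply: eq_bigr => i _; rewrite mulrA.
  move=> h; apply: le_trans h _.
  by rewrite ler_pdivrMr // mul1r.
have hup := h2 W WJ hlight.
have cBe : forall i j, i \in J -> c i * B i j = d j 0 * (c i * be i j).
  move=> i j iJ; rewrite /be.
  have [d0|dn0] := eqVneq (d j 0) 0.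
    rewrite d0 mul0r; apply/eqP; rewrite eq_le; apply/andP; split.
      by rewrite -d0; exact: cB.
    by apply: mulr_ge0; [exact: ltW (cpos _ iJ)|exact: hB].
  by field.
have hlow : ((C / M)%:E <= lpvalset B d W)%E.
  apply: lpval_ge => y y0 hy; rewrite lee_fin ler_pdivrMr //.
  have e1 : \sum_i (k i)%:R * c i * cov B y i = \sum_j y j 0 * (d j 0 * Ss R m n c be k j).
    rewrite /cov; under eq_bigr => i _ do rewrite mulr_sumr.
    rewrite exchange_big; apply: eq_bigr => j _; rewrite /Ss !mulr_sumr.
    apply: eq_bigr => i _.
    have [->|kn] := eqVneq (k i) 0%N; first by rewrite !mul0r !mulr0.
    have iJ := hk i kn.
    have := cBe i j iJ; set q := c i * be i j => e.
    by rewrite -[(k i)%:R * c i * _]mulrA [c i * _]mulrA e; ring.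
  have le1 : C <= \sum_i (k i)%:R * c i * cov B y i.
    apply: ler_sum => i _.
    have [->|kn] := eqVneq (k i) 0%N; first by rewrite !mul0r.
    have iJ := hk i kn.
    have := hy i; rewrite sum_ebasis inE kn => h.
    have : 0 <= (k i)%:R * c i by apply: mulr_ge0 => //; exact: ltW (cpos _ iJ).
    have hh1 : 1 <= cov B y i by exact: h.
    nra.
  apply: (le_trans le1); rewrite e1.
  have : \sum_j y j 0 * (d j 0 * Ss R m n c be k j) <= \sum_j y j 0 * (d j 0 * M).
    apply: ler_sum => j _; apply: ler_wpM2l => //; exact: ler_wpM2l.
  move=> h; apply: (le_trans h); rewrite /cost mulr_suml le_eqVlt; apply/orP; left; apply/eqP.
  by apply: eq_bigr => j _; ring.
have := le_trans hlow hup; rewrite lee_fin; lra.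
Qed.
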